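(* Let $k$ be an infinite field, let $A$ be a finitely generated $k$-algebra, let $s$ be a positive integer, and let $A[t]$ be the polynomial extension with $t$ a central indeterminate. Then $J_{s+1}(A[t])=J_s(A)[t]$.
   Context: For a $k$-algebra $R$ and positive integer $s$, a codimension $1$ ideal of tangent dimension $s$ is a two-sided ideal $I\subseteq R$ with $\dim_k R/I=1$ and $\dim_k I/I^2=s$; $J_s(R)$ is the intersection of all such ideals (and $J_s(R)=R$ if there are none). For an ideal $J\subseteq A$, $J[t]$ denotes the set of polynomials in $t$ with coefficients in $J$. *)

(* Defs.v *)
From HB Require Import structures.
From mathcomp Require Import all_boot all_order all_algebra.
Set Implicit Arguments. Unset Strict Implicit. Unset Printing Implicit Defensive.
Import Order.TTheory GRing.Theory Num.Theory.
Local Open Scope ring_scope.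

(* Subsets of a type are Prop-valued predicates (R may be infinite-dimensional). *)

Definition is_ideal (k : fieldType) (R : nzRingType) (sc : k -> R -> R)
    (I : R -> Prop) : Prop :=
  I 0 /\
  (forall x y, I x -> I y -> I (x + y)) /\
  (forall x, I x -> I (- x)) /\
  (forall c x, I x -> I (sc c x)) /\
  (forall r x, I x -> I (r * x)) /\
  (forall r x, I x -> I (x * r)).

Inductive ideal_sq (R : nzRingType) (I : R -> Prop) : R -> Prop :=
| isq_mul x y : I x -> I y -> ideal_sq I (x * y)
| isq_0 : ideal_sq I 0
| isq_add a b : ideal_sq I a -> ideal_sq I b -> ideal_sq I (a + b)
| isq_opp a : ideal_sq I a -> ideal_sq I (- a).

(* dim_k V/W = n, for k-subspaces W of V of R (k acting via [sc]):
   there are v_0, ..., v_{n-1} in V whose classes form a k-basis of V/W. *)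
Definition quot_dim (k : fieldType) (R : nzRingType) (sc : k -> R -> R)
    (V W : R -> Prop) (n : nat) : Prop :=
  exists v : 'I_n -> R,
    [/\ (forall i, V (v i)),
        (forall x, V x -> exists c : 'I_n -> k,
             W (x - \sum_(i < n) sc (c i) (v i))) &
        (forall c : 'I_n -> k, W (\sum_(i < n) sc (c i) (v i)) ->
             forall i, c i = 0)].

(* J_s(R): intersection of all codimension 1 ideals of tangent dimension s
   (all of R if there are none). *)
Definition Jtan (k : fieldType) (R : nzRingType) (sc : k -> R -> R)
    (s : nat) (x : R) : Prop :=
  forall I : R -> Prop,
    is_ideal sc I ->
    quot_dim sc (fun _ => True) I 1 ->
    quot_dim sc I (ideal_sq I) s ->
    I x.

Definition alg_scale (k : fieldType) (A : algType k) (c : k) (a : A) : A :=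
  c *: a.
Definition poly_scale (k : fieldType) (A : algType k) (c : k) (p : {poly A})
  : {poly A} := (c%:A : A) *: p.

Inductive in_subalg (k : fieldType) (A : algType k) (gs : seq A) : A -> Prop :=
| sa_gen a : a \in gs -> in_subalg gs a
| sa_one : in_subalg gs 1
| sa_add a b : in_subalg gs a -> in_subalg gs b -> in_subalg gs (a + b)
| sa_mul a b : in_subalg gs a -> in_subalg gs b -> in_subalg gs (a * b)
| sa_scale (c : k) a : in_subalg gs a -> in_subalg gs (c *: a).

Definition fin_gen_alg (k : fieldType) (A : algType k) : Prop :=
  exists gs : seq A, forall a : A, in_subalg gs a.

Definition infinite_field (k : fieldType) : Prop :=
  forall s : seq k, exists x : k, x \notin s.

(* Main.v *)
Require Import Defs.
From Stdlib Require Import ClassicalEpsilon FunctionalExtensionality PropExtensionality.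
From HB Require Import structures.
From mathcomp Require Import all_boot all_order all_algebra.
Import GRing.Theory.
Local Open Scope ring_scope.
Set Implicit Arguments. Unset Strict Implicit.

Section G.
Variables (k : fieldType) (R : nzRingType) (sc : k -> R -> R).
Hypothesis scA : forall a b y, sc a (sc b y) = sc (a * b) y.
Hypothesis sc1 : forall y, sc 1 y = y.
Hypothesis scB : forall a y z, sc a (y - z) = sc a y - sc a z.
Hypothesis sc0 : forall y, sc 0 y = 0.

Lemma ideal_add (I : R -> Prop) : is_ideal sc I -> forall a b, I a -> I b -> I (a + b).
Proof. by case=> _ [h _]. Qed.
Lemma ideal_opp (I : R -> Prop) : is_ideal sc I -> forall a, I a -> I (- a).
Proof. by case=> _ [_ [h _]]. Qed.
Lemma ideal_sub (I : R -> Prop) : is_ideal sc I -> forall a b, I a -> I b -> I (a - b).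
Proof. by move=> hI a b ha hb; apply: ideal_add => //; apply: ideal_opp. Qed.
Lemma ideal_0 (I : R -> Prop) : is_ideal sc I -> I 0.
Proof. by case. Qed.
Lemma ideal_sc (I : R -> Prop) : is_ideal sc I -> forall c a, I a -> I (sc c a).
Proof. by case=> _ [_ [_ [h _]]]. Qed.
Lemma ideal_mull (I : R -> Prop) : is_ideal sc I -> forall r a, I a -> I (r * a).
Proof. by case=> _ [_ [_ [_ [h _]]]]. Qed.
Lemma ideal_mulr (I : R -> Prop) : is_ideal sc I -> forall r a, I a -> I (a * r).
Proof. by case=> _ [_ [_ [_ [_ h]]]]. Qed.
Lemma ideal_sum (I : R -> Prop) n (F : 'I_n -> R) : is_ideal sc I ->
  (forall i, I (F i)) -> I (\sum_(i < n) F i).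
Proof. move=> hI hF; apply: big_ind => //; [exact: ideal_0|exact: ideal_add]. Qed.

Lemma sc_uniq (I : R -> Prop) : is_ideal sc I -> ~ I 1 -> forall d, I (sc d 1) -> d = 0.
Proof.
move=> hI n1 d hd; apply/eqP; apply/negPn/negP => dn0; apply: n1.
by rewrite -(sc1 1) -(mulVf dn0) -scA; apply: ideal_sc.
Qed.

Lemma codim1P (I : R -> Prop) : is_ideal sc I ->
  quot_dim sc (fun _ => True) I 1 <-> (~ I 1 /\ forall y, exists d, I (y - sc d 1)).
Proof.
move=> hI; split.
- case=> v [_ hsp hind].
  have n1 : ~ I 1.
    move=> h1; have := hind (fun _ => 1) _ ord0; rewrite big_ord1 sc1.
    have := ideal_mull hI (v ord0) h1; rewrite mulr1 => hv /(_ hv) /eqP.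
    by rewrite oner_eq0.
  split=> // y.
  have [e he] := hsp 1 Logic.I; rewrite big_ord1 in he.
  have e0 : e ord0 != 0.
    by apply/eqP=> e0; apply: n1; move: he; rewrite e0 sc0 subr0.
  have [c hc] := hsp y Logic.I; rewrite big_ord1 in hc.
  exists (c ord0 / e ord0).
  have -> : y - sc (c ord0 / e ord0) 1 =
     (y - sc (c ord0) (v ord0)) - sc (c ord0 / e ord0) (1 - sc (e ord0) (v ord0)).
    by rewrite scB scA mulfVK // opprB addrA subrK.
  by apply: ideal_sub => //; apply: ideal_sc.
- case=> n1 hsp; exists (fun _ => 1); split=> //.
  + move=> y _; have [d hd] := hsp y; exists (fun _ => d); by rewrite big_ord1.
  + move=> c; rewrite big_ord1 => h i; rewrite (ord1 i); exact: sc_uniq h.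
Qed.
End G.
Section S.
Variables (k : fieldType) (A : algType k) (l : k).
Local Notation x := (l%:A : A).

Lemma xcomm (y : A) : x * y = y * x.
Proof. by rewrite mulr_algl mulr_algr. Qed.

Lemma E_M (p q : {poly A}) : (p * q).[x] = p.[x] * q.[x].
Proof. by rewrite hornerM_comm // /comm_poly xcomm. Qed.

Lemma D_M (p q : {poly A}) :
  (p * q)^`().[x] = p^`().[x] * q.[x] + p.[x] * q^`().[x].
Proof. by rewrite derivM hornerD !E_M. Qed.

Lemma ps_C (c : k) (p : {poly A}) : poly_scale c p = (c%:A)%:P * p.
Proof. by rewrite /poly_scale mul_polyC. Qed.

Lemma E_ps c (p : {poly A}) : (poly_scale c p).[x] = c *: p.[x].
Proof. by rewrite ps_C hornerCM mulr_algl. Qed.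

Lemma D_ps c (p : {poly A}) : (poly_scale c p)^`().[x] = c *: p^`().[x].
Proof. by rewrite /poly_scale derivZ -mul_polyC hornerCM mulr_algl. Qed.

Lemma E_sum n (F : 'I_n -> {poly A}) : (\sum_(i < n) F i).[x] = \sum_(i < n) (F i).[x].
Proof. by rewrite horner_sum. Qed.

Lemma D_sum n (F : 'I_n -> {poly A}) : (\sum_(i < n) F i)^`().[x] = \sum_(i < n) (F i)^`().[x].
Proof. by rewrite raddf_sum horner_sum. Qed.
End S.

Section Poly.
Variables (k : fieldType) (A : algType k) (l : k) (m : A -> Prop).
Hypothesis hm : is_ideal (@alg_scale k A) m.
Local Notation x := (l%:A : A).
Definition Iof (q : {poly A}) := m q.[x].
Local Notation I := Iof.

Lemma I_ideal : is_ideal (@poly_scale k A) I.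
Proof.
rewrite /I; split; first by rewrite horner0; exact: ideal_0 hm.
split; first by move=> a b ha hb; rewrite hornerD; by apply: (ideal_add hm).
split; first by move=> a ha; rewrite hornerN; by apply: (ideal_opp hm).
split; first by move=> c a ha; rewrite E_ps; exact: (ideal_sc hm).
split; first by move=> r a ha; rewrite E_M; by apply: (ideal_mull hm).
by move=> r a ha; rewrite E_M; by apply: (ideal_mulr hm).
Qed.

Lemma sqC (e : A) : ideal_sq m e -> ideal_sq I e%:P.
Proof.
elim=> [a b ha hb| |a b _ ha _ hb|a _ ha].
- by rewrite polyCM; apply: isq_mul; rewrite /I hornerC.
- exact: isq_0.
- by rewrite polyCD; apply: isq_add.
- by rewrite polyCN; apply: isq_opp.
Qed.

Lemma sq_char (z : {poly A}) :
  ideal_sq I z <-> (ideal_sq m z.[x] /\ m z^`().[x]).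
Proof.
split.
- elim=> [a b ha hb| |a b _ [h1 h2] _ [h3 h4]|a _ [h1 h2]].
  + rewrite E_M D_M; split; first exact: isq_mul.
    apply: (ideal_add hm); [apply: (ideal_mull hm) | apply: (ideal_mulr hm)]; done.
  + by rewrite deriv0 horner0; split; [exact: isq_0 | exact: ideal_0 hm].
  + rewrite derivD !hornerD; split; first exact: isq_add.
    by apply: (ideal_add hm).
  + rewrite derivN !hornerN; split; first exact: isq_opp.
    by apply: (ideal_opp hm).
- case=> h1 h2.
  have -> : z = z.[x]%:P + (z - z.[x]%:P) by rewrite addrC subrK.
  apply: isq_add; first exact: sqC.
  have : root (z - z.[x]%:P) x by rewrite /root hornerD hornerN hornerC subrr.
  case/factor_theorem=> r hr; rewrite hr; apply: isq_mul.
  + have : m ((r * ('X - x%:P))^`().[x]) by rewrite -hr derivB derivC subr0.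
    by rewrite D_M hornerXsubC subrr derivXsubC hornerC mulr0 add0r mulr1.
  + by rewrite /I hornerXsubC subrr; exact: ideal_0 hm.
Qed.

Hypothesis n1 : ~ m 1.
Hypothesis hchi : forall y, exists d, m (y - alg_scale d 1).

Lemma suA d : m (d *: 1) -> d = 0.
Proof. exact: (sc_uniq (sc:=@alg_scale k A) (@scalerA _ _) (@scale1r _ _) hm n1). Qed.

Lemma sumD1 (V : zmodType) n (j : 'I_n.+1) (F : 'I_n.+1 -> V) :
  \sum_(i < n.+1) F i = F j + \sum_(i < n) F (lift j i).
Proof. by rewrite (bigD1_ord j). Qed.

Lemma Esub (p q : {poly A}) : (p - q).[x] = p.[x] - q.[x].
Proof. by rewrite hornerD hornerN. Qed.
Lemma Dsub (p q : {poly A}) : (p - q)^`().[x] = p^`().[x] - q^`().[x].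
Proof. by rewrite derivD derivN hornerD hornerN. Qed.
Lemma Dadd (p q : {poly A}) : (p + q)^`().[x] = p^`().[x] + q^`().[x].
Proof. by rewrite derivD hornerD. Qed.

Lemma I_codim : ~ I 1 /\ forall q, exists d, I (q - poly_scale d 1).
Proof.
split; first by rewrite /I hornerC.
move=> q; have [d hd] := hchi q.[x]; exists d.
by rewrite /I Esub E_ps hornerC.
Qed.

Lemma tan_up n : quot_dim (@alg_scale k A) m (ideal_sq m) n ->
  quot_dim (@poly_scale k A) I (ideal_sq I) n.+1.
Proof.
case=> v [hv hsp hind].
pose j := (@ord_max n).
exists (fun i => if unlift j i is Some i' then (v i')%:P else 'X - x%:P); split.
- move=> i; case: unliftP => [i'|] _; rewrite /I ?hornerC ?hornerXsubC ?subrr //.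
  exact: ideal_0 hm.
- move=> q hq; have [c hc] := hsp _ hq; have [d hd] := hchi (q^`().[x]).
  exists (fun i => if unlift j i is Some i' then c i' else d).
  apply/sq_char; rewrite (sumD1 j) unlift_none.
  under eq_bigr => i _ do rewrite liftK.
  split.
  + rewrite Esub hornerD E_ps hornerXsubC subrr scaler0 add0r E_sum.
    under eq_bigr => i _ do rewrite E_ps hornerC.
    exact: hc.
  + rewrite Dsub Dadd D_ps derivXsubC hornerC D_sum.
    under eq_bigr => i _ do rewrite D_ps derivC horner0 scaler0.
    by rewrite big1_eq addr0.
- move=> e /sq_char []; rewrite (sumD1 j) unlift_none.
  under eq_bigr => i _ do rewrite liftK.
  rewrite hornerD E_ps hornerXsubC subrr scaler0 add0r E_sum => h1.
  rewrite Dadd D_ps derivXsubC hornerC D_sum => h2.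
  have e1 : \sum_(i < n) (poly_scale (e (lift j i)) (v i)%:P).[x] =
     \sum_(i < n) alg_scale (e (lift j i)) (v i).
    by apply: eq_bigr => i _; rewrite E_ps hornerC.
  rewrite e1 in h1.
  have hl := hind _ h1.
  have hj : e j = 0.
    apply: suA; move: h2.
    have e2 : \sum_(i < n) (poly_scale (e (lift j i)) (v i)%:P)^`().[x] = 0.
      by apply: big1 => i _; rewrite D_ps derivC horner0 scaler0.
    by rewrite e2 addr0.
  move=> i; case: (unliftP j i) => [i'|] ->; [exact: hl | exact: hj].
Qed.

Lemma tan_down n : quot_dim (@poly_scale k A) I (ideal_sq I) n.+1 ->
  quot_dim (@alg_scale k A) m (ideal_sq m) n.
Proof.
case=> w [hw hsp hind].
have [dl hdl] : exists dl : 'I_n.+1 -> k, forall i, m ((w i)^`().[x] - dl i *: 1).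
  apply: (@fin_all_exists _ (fun _ => k) (fun i d => m ((w i)^`().[x] - d *: 1))).
  by move=> i; exact: hchi.
have Dlin : forall e : 'I_n.+1 -> k,
    m (\sum_i e i *: (w i)^`().[x] - (\sum_i e i * dl i) *: 1).
  move=> e.
  have -> : \sum_i e i *: (w i)^`().[x] - (\sum_i e i * dl i) *: 1 =
            \sum_i e i *: ((w i)^`().[x] - dl i *: 1).
    rewrite scaler_suml -sumrB; apply: eq_bigr => i _.
    by rewrite scalerBr scalerA.
  by apply: (ideal_sum hm) => i; apply: (ideal_sc hm).
have Dps : forall e : 'I_n.+1 -> k, (\sum_i poly_scale (e i) (w i))^`().[x] =
    \sum_i e i *: (w i)^`().[x].
  by move=> e; rewrite D_sum; apply: eq_bigr => i _; rewrite D_ps.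
have Eps : forall e : 'I_n.+1 -> k, (\sum_i poly_scale (e i) (w i)).[x] =
    \sum_i e i *: (w i).[x].
  by move=> e; rewrite E_sum; apply: eq_bigr => i _; rewrite E_ps.
have [j hj] : exists j, dl j != 0.
  case: (boolP [exists j, dl j != 0]) => [/existsP //|].
  rewrite negb_exists => /forallP hall; exfalso; apply: n1.
  have hu : I ('X - x%:P) by rewrite /I hornerXsubC subrr; exact: ideal_0 hm.
  have [c /sq_char [_ h2]] := hsp _ hu.
  move: h2; rewrite Dsub Dps derivXsubC hornerC => h2.
  have := Dlin c.
  have -> : \sum_i c i * dl i = 0.
    by apply: big1 => i _; move: (hall i); rewrite negbK => /eqP ->; rewrite mulr0.
  rewrite scale0r subr0 => h3.
  by have := ideal_add hm h2 h3; rewrite subrK.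
pose r i := dl (lift j i) / dl j.
pose v i := (w (lift j i)).[x] - r i *: (w j).[x].
have sumv : forall c : 'I_n -> k, \sum_i c i *: v i =
    \sum_i c i *: (w (lift j i)).[x] - ((\sum_i c i * dl (lift j i)) / dl j) *: (w j).[x].
  move=> c; rewrite /v.
  under eq_bigr => i _ do rewrite scalerBr scalerA.
  rewrite sumrB -scaler_suml; congr (_ - _ *: _).
  by rewrite mulr_suml; apply: eq_bigr => i _; rewrite /r mulrA.
exists v; split.
- move=> i; apply: (ideal_sub hm); first exact: hw.
  by apply: (ideal_sc hm); exact: hw.
- move=> a ha.
  have haP : I a%:P by rewrite /I hornerC.
  have [c /sq_char [h1 h2]] := hsp _ haP.
  move: h2; rewrite Dsub Dps derivC horner0 sub0r => h2.
  have h3 := ideal_add hm h2 (Dlin c).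
  rewrite addKr in h3.
  have hS : \sum_i c i * dl i = 0.
    apply: suA; rewrite -[_ *: 1]opprK; exact: (ideal_opp hm h3).
  move: hS; rewrite (sumD1 j) => hS.
  exists (fun i => c (lift j i)).
  rewrite /alg_scale sumv.
  move: h1; rewrite Esub hornerC Eps (sumD1 j).
  have -> : c j = - (\sum_i c (lift j i) * dl (lift j i)) / dl j.
    have hcd : c j * dl j = - \sum_i c (lift j i) * dl (lift j i).
      by apply/eqP; rewrite -addr_eq0 hS.
    by rewrite -hcd mulfK.
  by rewrite mulNr scaleNr [- _ + _]addrC.
- move=> c h.
  pose S := \sum_i c i * dl (lift j i).
  pose e i := if unlift j i is Some i' then c i' else - S / dl j.
  have he : ideal_sq I (\sum_i poly_scale (e i) (w i)).
    apply/sq_char; split.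
    + rewrite Eps (sumD1 j) /e unlift_none.
      under eq_bigr => i _ do rewrite liftK.
      move: h; rewrite /alg_scale sumv -/S.
      by rewrite mulNr scaleNr [- _ + _]addrC.
    + rewrite Dps; have := Dlin e.
      have -> : \sum_i e i * dl i = 0.
        rewrite (sumD1 j) /e unlift_none.
        under eq_bigr => i _ do rewrite liftK.
        by rewrite -/S !mulNr divfK // addNr.
      by rewrite scale0r subr0.
  move=> i; have := hind e he (lift j i).
  by rewrite /e liftK.
Qed.
End Poly.

Unset Implicit Arguments. Set Strict Implicit.
Lemma uniq_list (k : fieldType) (hk : infinite_field k) N :
  exists rs : seq k, uniq rs /\ size rs = N.
Proof.
elim: N => [|N [rs [hu hs]]]; first by exists [::].
have [y hy] := hk rs; exists (y :: rs); by rewrite /= hy hu hs.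
Qed.

Lemma poly_inf0 (k : fieldType) (hk : infinite_field k) (P : {poly k}) :
  (forall l, P.[l] = 0) -> P = 0.
Proof.
move=> hP; apply/eqP/negPn/negP => nz.
have [rs [hu hs]] := uniq_list _ hk (size P).
have hall : all (root P) rs by apply/allP => y _; rewrite /root hP.
by have := max_poly_roots nz hall hu; rewrite hs ltnn.
Qed.

Lemma algX (k : fieldType) (A : algType k) (l : k) i :
  (l%:A : A) ^+ i = (l ^+ i)%:A.
Proof.
elim: i => [|i IH]; first by rewrite !expr0 scale1r.
by rewrite exprS IH mulr_algl scalerA -exprS.
Qed.

Lemma scA_A (k : fieldType) (A : algType k) a b (y : A) :
  alg_scale a (alg_scale b y) = alg_scale (a * b) y.
Proof. by rewrite /alg_scale scalerA. Qed.
Lemma sc1_A (k : fieldType) (A : algType k) (y : A) : alg_scale 1 y = y.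
Proof. by rewrite /alg_scale scale1r. Qed.
Lemma scB_A (k : fieldType) (A : algType k) a (y z : A) :
  alg_scale a (y - z) = alg_scale a y - alg_scale a z.
Proof. by rewrite /alg_scale scalerBr. Qed.
Lemma sc0_A (k : fieldType) (A : algType k) (y : A) : alg_scale 0 y = 0.
Proof. by rewrite /alg_scale scale0r. Qed.

Lemma scA_P (k : fieldType) (A : algType k) a b (y : {poly A}) :
  poly_scale a (poly_scale b y) = poly_scale (a * b) y.
Proof. by rewrite /poly_scale scalerA mulr_algl scalerA. Qed.
Lemma sc1_P (k : fieldType) (A : algType k) (y : {poly A}) : poly_scale 1 y = y.
Proof. by rewrite /poly_scale scale1r scale1r. Qed.
Lemma scB_P (k : fieldType) (A : algType k) a (y z : {poly A}) :
  poly_scale a (y - z) = poly_scale a y - poly_scale a z.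
Proof. by rewrite /poly_scale scalerBr. Qed.
Lemma sc0_P (k : fieldType) (A : algType k) (y : {poly A}) : poly_scale 0 y = 0.
Proof. by rewrite /poly_scale scale0r scale0r. Qed.

Lemma ps1 (k : fieldType) (A : algType k) d : poly_scale d (1 : {poly A}) = (d%:A)%:P.
Proof. by rewrite /poly_scale -mul_polyC mulr1. Qed.

Theorem lemma1p1 (k : fieldType) (hk : infinite_field k)
    (A : algType k) (hA : fin_gen_alg A) (s : nat) (hs : (0 < s)%N)
    (p : {poly A}) :
  Jtan (@poly_scale k A) s.+1 p <-> (forall i : nat, Jtan (@alg_scale k A) s p`_i).
Proof.
split.
- move=> hp i m hm hc ht.
  have [n1 hchi] := (codim1P (@scA_A k A) (@sc1_A k A) (@scB_A k A) (@sc0_A k A) hm).1 hc.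
  have hpl : forall l, m (p.[l%:A]).
    move=> l; apply: (hp (Iof l m)); first exact: I_ideal.
    + apply/(codim1P (@scA_P k A) (@sc1_P k A) (@scB_P k A) (@sc0_P k A) (I_ideal l hm)).
      exact: I_codim.
    + exact: tan_up.
  pose d (j : nat) := proj1_sig (constructive_indefinite_description _ (hchi p`_j)).
  have hd : forall j, m (p`_j - d j *: 1).
    by move=> j; exact: (proj2_sig (constructive_indefinite_description _ (hchi p`_j))).
  pose P : {poly k} := \poly_(j < size p) d j.
  have P0 : P = 0.
    apply: (@poly_inf0 _ hk) => l.
    have h1 : m (p.[l%:A] - P.[l] *: 1).
      rewrite horner_coef horner_poly scaler_suml -sumrB.
      apply: (ideal_sum hm) => j.
      have -> : p`_j * (l%:A) ^+ j - (d j * l ^+ j) *: 1 =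
                 alg_scale (l ^+ j) (p`_j - d j *: 1).
        by rewrite /alg_scale algX mulr_algr scalerBr scalerA mulrC.
      by apply: (ideal_sc hm).
    apply: (sc_uniq (@scA_A k A) (@sc1_A k A) hm n1).
    rewrite /alg_scale.
    have -> : P.[l] *: (1 : A) = p.[l%:A] - (p.[l%:A] - P.[l] *: 1).
      by rewrite opprB addrC subrK.
    exact: (ideal_sub hm (hpl l) h1).
  have := hd i.
  case: (ltnP i (size p)) => hi.
  + have : P`_i = 0 by rewrite P0 coef0.
    by rewrite coef_poly hi => ->; rewrite scale0r subr0.
  + by rewrite nth_default // => _; exact: ideal_0 hm.
- move=> hpi I hI hc ht.
  have [n1I hchiI] := (codim1P (@scA_P k A) (@sc1_P k A) (@scB_P k A) (@sc0_P k A) hI).1 hc.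
  have [l hl] := hchiI 'X; rewrite ps1 in hl.
  pose m := fun a : A => I a%:P.
  have hIe : forall q, I q <-> m q.[l%:A].
    move=> q.
    have : root (q - (q.[l%:A])%:P) (l%:A) by rewrite /root hornerD hornerN hornerC subrr.
    case/factor_theorem => r hr.
    have hr' : I (q - q.[l%:A]%:P) by rewrite hr; apply: (ideal_mull hI).
    split => h; rewrite /m.
    + have -> : q.[l%:A]%:P = q - (q - q.[l%:A]%:P) by rewrite opprB addrC subrK.
      exact: (ideal_sub hI h hr').
    + have -> : q = (q - q.[l%:A]%:P) + q.[l%:A]%:P by rewrite subrK.
      exact: (ideal_add hI hr' h).
  have eI : I = Iof l m.
    apply: functional_extensionality => q; apply: propositional_extensionality.
    exact: hIe.
  have hm : is_ideal (@alg_scale k A) m.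
    rewrite /m; split; first by rewrite polyC0; exact: ideal_0 hI.
    split; first by move=> a b ha hb; rewrite polyCD; exact: (ideal_add hI).
    split; first by move=> a ha; rewrite polyCN; exact: (ideal_opp hI).
    split.
      move=> c a ha.
      have -> : (alg_scale c a)%:P = poly_scale c a%:P.
        by rewrite /poly_scale /alg_scale -mul_polyC -polyCM mulr_algl.
      exact: (ideal_sc hI).
    split; first by move=> r a ha; rewrite polyCM; exact: (ideal_mull hI).
    by move=> r a ha; rewrite polyCM; exact: (ideal_mulr hI).
  have n1 : ~ m 1 by rewrite /m polyC1.
  have hchi : forall y, exists d, m (y - alg_scale d 1).
    move=> y; have [d hd] := hchiI y%:P; exists d.
    by rewrite /m polyCB /alg_scale; rewrite ps1 in hd.
  have hc' : quot_dim (@alg_scale k A) (fun _ => True) m 1.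
    by apply/(codim1P (@scA_A k A) (@sc1_A k A) (@scB_A k A) (@sc0_A k A) hm).
  rewrite eI in ht.
  have hts := tan_down hm n1 hchi ht.
  have hmi : forall i, m p`_i by move=> i; exact: (hpi i m hm hc' hts).
  apply/hIe; rewrite horner_coef.
  by apply: (ideal_sum hm) => i; apply: (ideal_mulr hm); exact: hmi.
Qed.
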